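(* Let $K$ be a field of characteristic $p\neq 2$, and let $Os^+(0,0)$ be the $K$-algebra with basis $\{e_i: i\in\mathbb Z,\ i\ge -1\}$ and multiplication $e_i\star e_j=(i+j+2)e_{i+j}$. Then every multilinear polynomial identity of degree $3$ of $(Os^+(0,0),\star)$ follows from the commutativity identity $t_1t_2=t_2t_1$. *)

(* Defs.v *)
From HB Require Import structures.
From mathcomp Require Import all_boot all_order all_algebra.
Set Implicit Arguments. Unset Strict Implicit. Unset Printing Implicit Defensive.
Import Order.TTheory GRing.Theory Num.Theory.
Local Open Scope ring_scope.

(* Carrier: {poly K}; the monomial 'X^n represents the basis vector   *)
(* e_(n-1)  (n : nat, so i = n-1 ranges over i >= -1).                *)
(* Product, defined bilinearly from the basis rule                    *)
(*   e_i * e_j = (i+j+2) e_(i+j):                                     *)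
(* with i = a-1, j = b-1 : coefficient a+b, target e_(a+b-2) = X^(a+b-1)*)
(* (when a+b = 0 the coefficient is 0, so the target is irrelevant).  *)

Definition os_e (K : fieldType) (n : nat) : {poly K} := 'X^n.

Definition os_star (K : fieldType) (x y : {poly K}) : {poly K} :=
  \sum_(a < size x) \sum_(b < size y)
     (x`_a * y`_b * (a + b)%:R) *: os_e K (a + b).-1.

Inductive nterm : Type :=
| NVar of nat
| NMul of nterm & nterm.

Fixpoint nterm_eqb (u v : nterm) : bool :=
  match u, v with
  | NVar m, NVar n => m == n
  | NMul u1 u2, NMul v1 v2 => nterm_eqb u1 v1 && nterm_eqb u2 v2
  | _, _ => false
  end.

Lemma nterm_eqP : Equality.axiom nterm_eqb.
Proof.
elim=> [m|u1 IH1 u2 IH2] [n|v1 v2] /=; try by constructor.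
- by apply: (iffP eqP) => [->|[]].
- by apply: (iffP andP) => [[/IH1 -> /IH2 ->]|[<- <-]]; split; [apply/IH1|apply/IH2].
Qed.

HB.instance Definition _ := hasDecEq.Build nterm nterm_eqP.

Fixpoint nvars (u : nterm) : seq nat :=
  match u with
  | NVar n => [:: n]
  | NMul u v => nvars u ++ nvars v
  end.

Definition fpoly (K : fieldType) := seq (K * nterm).

Definition fcoef (K : fieldType) (f : fpoly K) (m : nterm) : K :=
  \sum_(c <- f | c.2 == m) c.1.

Definition fadd (K : fieldType) (f g : fpoly K) : fpoly K := f ++ g.
Definition fscale (K : fieldType) (k : K) (f : fpoly K) : fpoly K :=
  [seq (k * c.1, c.2) | c <- f].
Definition fmul (K : fieldType) (f g : fpoly K) : fpoly K :=
  [seq (a.1 * b.1, NMul a.2 b.2) | a <- f, b <- g].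

Fixpoint msubst (K : fieldType) (s : nat -> fpoly K) (u : nterm) : fpoly K :=
  match u with
  | NVar n => s n
  | NMul u v => fmul (msubst s u) (msubst s v)
  end.

Definition fsubst (K : fieldType) (s : nat -> fpoly K) (f : fpoly K) : fpoly K :=
  flatten [seq fscale c.1 (msubst s c.2) | c <- f].

(* T-ideal generated by a set S of polynomials: the smallest ideal of the
   free nonassociative algebra containing S and closed under all
   substitutions (endomorphisms). Membership is up to equality of
   polynomials (equal coefficients). *)
Inductive in_Tideal (K : fieldType) (S : fpoly K -> Prop) : fpoly K -> Prop :=
| TI_gen g s : S g -> in_Tideal S (fsubst s g)
| TI_zero : in_Tideal S [::]
| TI_add f g : in_Tideal S f -> in_Tideal S g -> in_Tideal S (fadd f g)
| TI_scale k f : in_Tideal S f -> in_Tideal S (fscale k f)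
| TI_mull h f : in_Tideal S f -> in_Tideal S (fmul h f)
| TI_mulr f h : in_Tideal S f -> in_Tideal S (fmul f h)
| TI_eq f g : in_Tideal S f -> fcoef f =1 fcoef g -> in_Tideal S g.

Definition comm_poly (K : fieldType) : fpoly K :=
  [:: (1, NMul (NVar 1) (NVar 2)); (-1, NMul (NVar 2) (NVar 1))].

Definition follows_from_comm (K : fieldType) (f : fpoly K) : Prop :=
  in_Tideal (fun g => g = comm_poly K) f.

Definition multilinear3 (K : fieldType) (f : fpoly K) : bool :=
  all (fun c => perm_eq (nvars c.2) [:: 1%N; 2%N; 3%N]) f.

Fixpoint os_evalm (K : fieldType) (env : nat -> {poly K}) (u : nterm) : {poly K} :=
  match u with
  | NVar n => env n
  | NMul u v => os_star (os_evalm env u) (os_evalm env v)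
  end.

Definition os_eval (K : fieldType) (env : nat -> {poly K}) (f : fpoly K) : {poly K} :=
  \sum_(c <- f) c.1 *: os_evalm env c.2.

Definition os_identity (K : fieldType) (f : fpoly K) : Prop :=
  forall env : nat -> {poly K}, os_eval env f = 0.

(* Main.v *)
Require Import Defs.
From mathcomp Require Import all_boot all_order all_algebra.
From mathcomp Require Import ring zify.
Set Implicit Arguments. Unset Strict Implicit. Unset Printing Implicit Defensive.
Import GRing.Theory.
Local Open Scope ring_scope.

Section S.
Variable K : fieldType.

Lemma os_starZl (c : K) x y : os_star (c *: x) y = c *: os_star x y.
Proof.
have [->|c0] := eqVneq c 0.
  by rewrite scale0r !scale0r /os_star size_poly0 big_ord0.
rewrite /os_star size_scale // scaler_sumr; apply: eq_bigr => a _.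
rewrite scaler_sumr; apply: eq_bigr => b _.
by rewrite coefZ scalerA !mulrA.
Qed.

Lemma os_starZr (c : K) x y : os_star x (c *: y) = c *: os_star x y.
Proof.
have [->|c0] := eqVneq c 0.
  rewrite !scale0r /os_star size_poly0; apply: big1 => i _; by rewrite big_ord0.
rewrite /os_star size_scale // scaler_sumr; apply: eq_bigr => a _.
rewrite scaler_sumr; apply: eq_bigr => b _.
rewrite coefZ scalerA; congr (_ *: _); ring.
Qed.

Lemma os_starXX (a b : nat) :
  os_star ('X^a : {poly K}) 'X^b = (a + b)%:R *: 'X^((a + b).-1).
Proof.
rewrite /os_star !size_polyXn big_ord_recr /= big1 ?add0r; last first.
  move=> i _; apply: big1 => j _.
  by rewrite coefXn (ltn_eqF (ltn_ord i)) mul0r mul0r scale0r.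
rewrite big_ord_recr /= big1 ?add0r; last first.
  by move=> j _; rewrite [_`_j]coefXn (ltn_eqF (ltn_ord j)) mulr0 mul0r scale0r.
by rewrite !coefXn !eqxx !mul1r /os_e.
Qed.

End S.

Definition env (K : fieldType) (k : nat) : nat -> {poly K} :=
  fun n => if n == k then 'X^2 else 'X^0.

Definition cls (m : nterm) : nat :=
  match m with
  | NMul (NMul _ _) (NVar c) => c
  | NMul (NVar c) (NMul _ _) => c
  | _ => 0%N
  end.

Definition ml_list : seq nterm :=
  [seq NMul (NMul (NVar p.1.1) (NVar p.1.2)) (NVar p.2) |
     p <- [:: (1,2,3); (1,3,2); (2,1,3); (2,3,1); (3,1,2); (3,2,1)]]%N ++
  [seq NMul (NVar p.2) (NMul (NVar p.1.1) (NVar p.1.2)) |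
     p <- [:: (1,2,3); (1,3,2); (2,1,3); (2,3,1); (3,1,2); (3,2,1)]]%N.

Lemma nvars_gt0 u : (0 < size (nvars u))%N.
Proof. by elim: u => //= u IH v _; rewrite size_cat addn_gt0 IH. Qed.

Lemma size1 u : size (nvars u) = 1%N -> exists x, u = NVar x.
Proof.
case: u => [x|u1 u2] /=; first by eauto.
rewrite size_cat; have:= nvars_gt0 u1; have := nvars_gt0 u2; lia.
Qed.

Lemma size2 u : size (nvars u) = 2%N -> exists x y, u = NMul (NVar x) (NVar y).
Proof.
case: u => [x|u1 u2] //=.
rewrite size_cat => H; have h1:= nvars_gt0 u1; have h2 := nvars_gt0 u2.
have [x ->] : exists x, u1 = NVar x by apply: size1; lia.
have [y ->] : exists y, u2 = NVar y by apply: size1; lia.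
by eauto.
Qed.

Lemma ml_enum m : perm_eq (nvars m) [:: 1; 2; 3]%N -> m \in ml_list.
Proof.
move=> Hp; have := perm_size Hp.
case: m Hp => [n|u v] Hp //=; rewrite size_cat => Hs.
have h1:= nvars_gt0 u; have h2 := nvars_gt0 v.
have [[Hu Hv]|[Hu Hv]] : (size (nvars u) = 1 /\ size (nvars v) = 2 \/
   size (nvars u) = 2 /\ size (nvars v) = 1)%N by lia.
- case: (size1 Hu) => c ?; case: (size2 Hv) => x [y ?]; subst.
  have Hx : x \in [:: 1; 2; 3]%N by rewrite -(perm_mem Hp) /= !inE eqxx ?orbT.
  have Hy : y \in [:: 1; 2; 3]%N by rewrite -(perm_mem Hp) /= !inE eqxx ?orbT.
  have Hc : c \in [:: 1; 2; 3]%N by rewrite -(perm_mem Hp) /= !inE eqxx ?orbT.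
  move: Hp; rewrite !inE in Hx Hy Hc.
  by case/or3P: Hx => /eqP ->; case/or3P: Hy => /eqP ->; case/or3P: Hc => /eqP ->; apply/implyP.
- case: (size1 Hv) => c ?; case: (size2 Hu) => x [y ?]; subst.
  have Hx : x \in [:: 1; 2; 3]%N by rewrite -(perm_mem Hp) /= !inE eqxx ?orbT.
  have Hy : y \in [:: 1; 2; 3]%N by rewrite -(perm_mem Hp) /= !inE eqxx ?orbT.
  have Hc : c \in [:: 1; 2; 3]%N by rewrite -(perm_mem Hp) /= !inE eqxx ?orbT.
  move: Hp; rewrite !inE in Hx Hy Hc.
  by case/or3P: Hx => /eqP ->; case/or3P: Hy => /eqP ->; case/or3P: Hc => /eqP ->; apply/implyP.
Qed.

Ltac ml_cases H := rewrite /ml_list /= in H;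
  repeat (case/predU1P: H => [->|H]); [..|by []].

Lemma ml_cls m : perm_eq (nvars m) [:: 1; 2; 3]%N -> cls m \in [:: 1; 2; 3]%N.
Proof. move/ml_enum => H; by ml_cases H. Qed.

Lemma ml_eval (K : fieldType) k m : k \in [:: 1; 2; 3]%N ->
  perm_eq (nvars m) [:: 1; 2; 3]%N ->
  os_evalm (env K k) m = if cls m == k then 0 else 2%:R%:P.
Proof.
rewrite !inE => Hk /ml_enum H; ml_cases H;
 (case/or3P: Hk => /eqP ->; rewrite /= /env /=;
  rewrite ?(os_starXX, os_starZl, os_starZr) /= !scalerA -!natrM;
  rewrite ?(add0n, addn0, mul0n, muln0, muln1, mul1n, scale0r, expr0, alg_polyC) //).
Qed.

Section T.
Variable K : fieldType.
Notation S := (fun g => g = @Defs.comm_poly K).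

Definition Rel (a b : nterm) := in_Tideal S [:: (1 : K, a); (-1, b)].

Lemma fcoef_cons (p : K * nterm) l x :
  fcoef (p :: l) x = (if p.2 == x then p.1 else 0) + fcoef l x.
Proof. by rewrite /fcoef big_cons; case: ifP => _; rewrite ?add0r. Qed.
Lemma fcoef_nil x : fcoef ([::] : fpoly K) x = 0.
Proof. by rewrite /fcoef big_nil. Qed.
Lemma fcoef_cat (l1 l2 : fpoly K) x : fcoef (l1 ++ l2) x = fcoef l1 x + fcoef l2 x.
Proof. by rewrite /fcoef big_cat. Qed.

Lemma R_refl a : Rel a a.
Proof.
apply: (TI_eq (TI_zero _)) => x; rewrite !fcoef_cons fcoef_nil /=.
by case: eqP => _; rewrite ?addr0 ?subrr.
Qed.

Lemma R_trans a b c : Rel a b -> Rel b c -> Rel a c.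
Proof.
move=> H1 H2; apply: (TI_eq (TI_add H1 H2)) => x.
rewrite /fadd fcoef_cat !fcoef_cons !fcoef_nil /=.
case: eqP => _; case: eqP => _; case: eqP => _; ring.
Qed.

Lemma R_swap u v : Rel (NMul u v) (NMul v u).
Proof.
pose s := fun n : nat => if n == 1%N then [:: (1 : K, u)] else [:: (1 : K, v)].
apply: (TI_eq (@TI_gen _ S _ s erefl)) => x.
by rewrite /fsubst /= !fcoef_cons !fcoef_nil /= !mulr1.
Qed.

Lemma R_mulr a b c : Rel a b -> Rel (NMul a c) (NMul b c).
Proof.
move=> H; apply: (TI_eq (TI_mulr [:: (1, c)] H)) => x.
by rewrite /fmul /= !fcoef_cons !fcoef_nil /= !mulr1.
Qed.

Lemma R2 x y c : Rel (NMul (NMul x y) c) (NMul (NMul y x) c).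
Proof. exact/R_mulr/R_swap. Qed.
Lemma R3 x y c : Rel (NMul c (NMul x y)) (NMul (NMul x y) c).
Proof. exact: R_swap. Qed.
Lemma R4 x y c : Rel (NMul c (NMul x y)) (NMul (NMul y x) c).
Proof. exact: R_trans (R3 _ _ _) (R2 _ _ _). Qed.

Definition rep (j : nat) : nterm :=
  NMul (NMul (NVar (if j == 1%N then 2 else 1)) (NVar (if j == 3%N then 2 else 3)))
       (NVar j).

Lemma ml_rel m : perm_eq (nvars m) [:: 1; 2; 3]%N -> Rel m (rep (cls m)).
Proof.
move/ml_enum => H; ml_cases H; rewrite /rep /=;
 first [exact: R_refl | exact: R2 | exact: R3 | exact: R4].
Qed.

End T.

Section U.
Variable K : fieldType.
Notation S := (fun g => g = @Defs.comm_poly K).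

Definition sig (f : fpoly K) j := \sum_(c <- f | cls c.2 == j) c.1.
Definition tau (f : fpoly K) k := \sum_(c <- f | cls c.2 != k) c.1.

Lemma evalk f k : multilinear3 f -> k \in [:: 1; 2; 3]%N ->
  os_eval (env K k) f = (tau f k * 2%:R)%:P.
Proof.
move=> Hf Hk; elim: f Hf => [|c f IH] /=.
  by rewrite /os_eval /tau !big_nil mul0r.
case/andP => Hc Hf; rewrite /os_eval /tau !big_cons -/(os_eval _ f) IH //.
rewrite (ml_eval K Hk Hc); case: (cls c.2 == k) => /=.
  by rewrite scaler0 add0r.
by rewrite -mul_polyC -!polyCM -polyCD mulrDl.
Qed.

Lemma tau_dec f : multilinear3 f ->
  [/\ tau f 1 = sig f 2 + sig f 3, tau f 2 = sig f 1 + sig f 3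
    & tau f 3 = sig f 1 + sig f 2].
Proof.
elim: f => [|c f IH] /=.
  by rewrite /tau /sig !big_nil addr0.
case/andP => Hc Hf; case: (IH Hf); rewrite /tau /sig !big_cons => -> -> ->.
have := ml_cls Hc; rewrite !inE => /or3P [] /eqP -> /=; split; ring.
Qed.

Lemma sig_out f j : multilinear3 f -> j \notin [:: 1; 2; 3]%N -> sig f j = 0.
Proof.
move=> Hf Hj; elim: f Hf => [|c f IH] /=; first by rewrite /sig big_nil.
case/andP => Hc Hf; rewrite /sig big_cons -/(sig f j) IH //.
case: eqP => // He; move: (ml_cls Hc); rewrite He => H; by rewrite H in Hj.
Qed.

Lemma stepB_aux f : multilinear3 f ->
  in_Tideal S (f ++ [seq (- c.1, rep (cls c.2)) | c <- f]).
Proof.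
elim: f => [|[k m] f IH] /=; first by move=> _; apply: TI_zero.
case/andP => Hc Hf.
apply: (TI_eq (TI_add (TI_scale k (ml_rel K Hc)) (IH Hf))) => x.
rewrite /fadd /fscale /= !fcoef_cons !fcoef_cat !fcoef_cons /= ?fcoef_nil.
case: eqP => _; case: eqP => _; ring.
Qed.

End U.

Unset Implicit Arguments.
Theorem mainTheorem13 (K : fieldType) (hK : (2%:R : K) != 0) (f : fpoly K) :
  multilinear3 f -> os_identity f -> follows_from_comm f.
Proof.
move=> Hf Hid.
have Ht k : k \in [:: 1; 2; 3]%N -> tau f k = 0.
  move=> Hk; have := Hid (env K k); rewrite (evalk Hf Hk) => /eqP.
  by rewrite polyC_eq0 mulf_eq0 (negbTE hK) orbF => /eqP.
have Hs j : sig f j = 0.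
  case: (boolP (j \in [:: 1; 2; 3]%N)) => Hj; last exact: sig_out.
  case: (tau_dec Hf) => H1 H2 H3.
  have := Ht 1%N erefl; have := Ht 2%N erefl; have := Ht 3%N erefl.
  rewrite H1 H2 H3 => E3 E2 E1.
  have e1 : sig f 1 = 0.
    have : sig f 1 *+ 2 = 0.
      by rewrite mulr2n; apply/eqP; rewrite -(subr_eq0) ; apply/eqP;
        transitivity ((sig f 1 + sig f 3) + (sig f 1 + sig f 2) - (sig f 2 + sig f 3)); [ring| rewrite E1 E2 E3; ring].
    by move/eqP; rewrite -mulr_natr mulf_eq0 (negbTE hK) orbF => /eqP.
  have e2 : sig f 2 = 0 by apply/eqP; rewrite -E3 e1 add0r.
  have e3 : sig f 3 = 0 by apply/eqP; rewrite -E2 e1 add0r.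
  by move: Hj; rewrite !inE => /or3P [] /eqP ->.
apply: (TI_eq (stepB_aux Hf)) => x.
rewrite fcoef_cat -[RHS]addr0; congr (_ + _).
rewrite /fcoef big_map.
pose j0 := match x with NMul _ (NVar j) => j | _ => 0%N end.
rewrite (eq_bigl (fun c => (cls c.2 == j0) && (rep j0 == x))); last first.
  move=> c /=; case: eqP => [Hx|Hne]; first by rewrite /j0 -Hx /= !eqxx.
  apply/esym/andP => [[/eqP Hj /eqP Hr]]; apply: Hne; by rewrite Hj.
case: (rep j0 == x); last by rewrite big_pred0 // => c; rewrite andbF.
rewrite (eq_bigl (fun c => cls c.2 == j0)); last by move=> c; rewrite andbT.
by rewrite sumrN -/(sig f j0) Hs oppr0.
Qed.
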